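(* Let $\mathfrak{n}\in A_+$ and $\gamma=\begin{pmatrix}a&b\\c&d\end{pmatrix}\in\mathrm{GL}_2(A)$. Then there exist $u\in K_\infty$ and $\gamma_0\in\Gamma_0(\mathfrak{n})$ such that $\gamma_0\gamma e_0=e_g$, where $$g=w_\mathfrak{n}\begin{pmatrix}\pi_\infty^{\deg\mathfrak{n}+2\delta_\mathfrak{n}(c,d)+\epsilon_\mathfrak{n}(c,d)}&u\\0&1\end{pmatrix}\begin{pmatrix}0&1\\\pi_\infty&0\end{pmatrix}^{\epsilon_\mathfrak{n}(c,d)},\qquad w_\mathfrak{n}=\begin{pmatrix}0&-1\\\mathfrak{n}&0\end{pmatrix}.$$
   Context: $\mathbb{F}_q$ a finite field, $A=\mathbb{F}_q[\theta]$, $A_+$ the monic polynomials, $\deg0=-\infty$; $\pi_\infty=\theta^{-1}$, $K_\infty=\mathbb{F}_q((\pi_\infty))$, $O_\infty=\mathbb{F}_q[[\pi_\infty]]$, $\mathcal{I}_\infty$ the matrices in $\mathrm{GL}_2(O_\infty)$ with lower-left entry in $\pi_\infty O_\infty$. Oriented edges of the Bruhat–Tits tree: cosets $\mathrm{GL}_2(K_\infty)/K_\infty^\times\mathcal{I}_\infty$, with $e_g$ the coset of $g$, left action of $\mathrm{GL}_2(K_\infty)$, and $e_0=e_I$. $\Gamma_0(\mathfrak{n})=\{\begin{pmatrix}a&b\\c&d\end{pmatrix}\in\mathrm{GL}_2(A):\mathfrak{n}\mid c\}$. For coprime $c,d\in A$ (as for the bottom row of $\gamma$), $\delta_\mathfrak{n}(c,d)=\min\{\max(\deg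 x,\deg y): x,y\in A,\ \gcd(cx+dy,\mathfrak{n})=1\}$, and $\epsilon_\mathfrak{n}(c,d)=0$ if there exist $x_0,y_0\in A$ with $\deg y_0<\deg x_0=\delta_\mathfrak{n}(c,d)$ and $\gcd(cx_0+dy_0,\mathfrak{n})=1$, and $\epsilon_\mathfrak{n}(c,d)=1$ otherwise. *)

(* Defs.v *)
(* Setting of Lemma 4.2: F = F_q a finite field, A = {poly F} = F_q[theta],
   K_inf = F_q((pi)) with pi = theta^-1, built here as the fraction field of the
   ring ps F of formal power series F[[pi]] (constructed below with full proofs). *)
From HB Require Import structures.
From mathcomp Require Import all_boot all_order all_algebra.
From mathcomp Require Import boolp classical_sets zify.
Set Implicit Arguments. Unset Strict Implicit. Unset Printing Implicit Defensive.
Import GRing.Theory.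
Local Open Scope ring_scope.

Definition ps (F : fieldType) : Type := nat -> F.
HB.instance Definition _ (F : fieldType) := Choice.on (ps F).

Definition ps_zero (F : fieldType) : ps F := fun _ => 0.
Definition ps_add (F : fieldType) (f g : ps F) : ps F := fun n => f n + g n.
Definition ps_opp (F : fieldType) (f : ps F) : ps F := fun n => - f n.

Lemma ps_addA F : associative (@ps_add F).
Proof. by move=> f g h; apply: funext => n; rewrite /ps_add addrA. Qed.
Lemma ps_addC F : commutative (@ps_add F).
Proof. by move=> f g; apply: funext => n; rewrite /ps_add addrC. Qed.
Lemma ps_add0 F : left_id (@ps_zero F) (@ps_add F).
Proof. by move=> f; apply: funext => n; rewrite /ps_add /ps_zero add0r. Qed.
Lemma ps_addN F : left_inverse (@ps_zero F) (@ps_opp F) (@ps_add F).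
Proof. by move=> f; apply: funext => n; rewrite /ps_add /ps_opp /ps_zero addNr. Qed.

HB.instance Definition _ (F : fieldType) :=
  GRing.isZmodule.Build (ps F) (@ps_addA F) (@ps_addC F) (@ps_add0 F) (@ps_addN F).

Definition ps_trunc (F : fieldType) (n : nat) (f : ps F) : {poly F} := \poly_(i < n) f i.

Definition ps_one (F : fieldType) : ps F := fun n => (n == 0%N)%:R.
Definition ps_mul (F : fieldType) (f g : ps F) : ps F :=
  fun n => (ps_trunc n.+1 f * ps_trunc n.+1 g)`_n.

Lemma coefM_take (F : fieldType) (p q : {poly F}) n m : (n < m)%N ->
  (p * q)`_n = (take_poly m p * take_poly m q)`_n.
Proof.
move=> lt_nm; rewrite !coefM; apply: eq_bigr => i _.
rewrite !coef_take_poly (leq_ltn_trans (leq_ord i) lt_nm).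
by rewrite (leq_ltn_trans (leq_subr _ _) lt_nm).
Qed.

Lemma ps_truncE (F : fieldType) n (f : ps F) i : (ps_trunc n f)`_i = if (i < n)%N then f i else 0.
Proof. by rewrite coef_poly. Qed.

Lemma ps_take_truncS (F : fieldType) k m (f : ps F) : (k <= m)%N ->
  take_poly k (ps_trunc m f) = ps_trunc k f.
Proof.
move=> le_km; apply/polyP => i; rewrite coef_take_poly !ps_truncE.
by case: ifP => // lt_i; rewrite (leq_trans lt_i le_km).
Qed.

Lemma ps_mulE (F : fieldType) (f g : ps F) n m : (n < m)%N ->
  ps_mul f g n = (ps_trunc m f * ps_trunc m g)`_n.
Proof.
move=> lt_nm; rewrite /ps_mul [RHS](coefM_take _ _ (ltnSn n)).
by rewrite !ps_take_truncS.
Qed.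

Lemma ps_trunc_mul (F : fieldType) (f g : ps F) m :
  ps_trunc m (ps_mul f g) = take_poly m (ps_trunc m f * ps_trunc m g).
Proof.
apply/polyP => i; rewrite ps_truncE coef_take_poly.
by case: ifP => // lt_im; apply: ps_mulE.
Qed.

Lemma ps_mulA F : associative (@ps_mul F).
Proof.
move=> f g h; apply: funext => n.
rewrite (ps_mulE _ _ (ltnSn n)) [RHS](ps_mulE _ _ (ltnSn n)) !ps_trunc_mul.
set tf := ps_trunc n.+1 f; set tg := ps_trunc n.+1 g; set th := ps_trunc n.+1 h.
have Th : take_poly n.+1 th = th by apply: take_poly_id; apply: size_poly.
have Tf : take_poly n.+1 tf = tf by apply: take_poly_id; apply: size_poly.
transitivity ((tf * tg * th)`_n).
  by rewrite -mulrA [RHS](coefM_take _ _ (ltnSn n)) Tf.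
by rewrite [LHS](coefM_take _ _ (ltnSn n)) Th.
Qed.

Lemma ps_mulC F : commutative (@ps_mul F).
Proof. by move=> f g; apply: funext => n; rewrite /ps_mul mulrC. Qed.

Lemma ps_trunc_one (F : fieldType) m : (0 < m)%N -> ps_trunc m (@ps_one F) = 1.
Proof.
move=> m0; apply/polyP => i; rewrite ps_truncE coef1 /ps_one.
case: ifP => // /negbT; rewrite -leqNgt => le_mi.
by rewrite gtn_eqF // (leq_trans m0 le_mi).
Qed.

Lemma ps_mul1 F : left_id (@ps_one F) (@ps_mul F).
Proof.
move=> f; apply: funext => n; rewrite /ps_mul ps_trunc_one // mul1r ps_truncE ltnSn //.
Qed.

Lemma ps_mulDl F : left_distributive (@ps_mul F) (@ps_add F).
Proof.
have T m (f g : ps F) : ps_trunc m (ps_add f g) = ps_trunc m f + ps_trunc m g.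
  by apply/polyP => i; rewrite coefD !ps_truncE; case: ifP; rewrite ?addr0.
by move=> f g h; apply: funext => n; rewrite /ps_mul T mulrDl coefD.
Qed.

Lemma ps_one_neq0 F : @ps_one F != 0.
Proof.
apply/eqP => /(congr1 (fun f : ps F => f 0%N)); rewrite /ps_one /=.
by move/eqP; rewrite oner_eq0.
Qed.

HB.instance Definition _ (F : fieldType) :=
  GRing.Zmodule_isComNzRing.Build (ps F) (@ps_mulA F) (@ps_mulC F)
    (@ps_mul1 F) (@ps_mulDl F) (@ps_one_neq0 F).

(* ps_invp f n is the truncation of degree n of the inverse of f     *)
Fixpoint ps_invp (F : fieldType) (f : ps F) (n : nat) : {poly F} :=
  match n with
  | 0%N => ((f 0%N)^-1)%:P
  | k.+1 => ps_invp f k +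
      (- (f 0%N)^-1 * (ps_trunc k.+2 f * ps_invp f k)`_k.+1) *: 'X^(k.+1)
  end.

Definition ps_inv (F : fieldType) (f : ps F) : ps F :=
  if f 0%N != 0 then (fun n => (ps_invp f n)`_n) else f.

Definition ps_unit (F : fieldType) : {pred ps F} := fun f => f 0%N != 0.

Lemma size_ps_invp (F : fieldType) (f : ps F) n : (size (ps_invp f n) <= n.+1)%N.
Proof.
elim: n => [|n IH] /=; first by rewrite size_polyC; case: (_ != 0).
rewrite (leq_trans (size_polyD _ _)) // geq_max (leq_trans IH) //.
by rewrite (leq_trans (size_scale_leq _ _)) // size_polyXn.
Qed.

Lemma coef_ps_invpS (F : fieldType) (f : ps F) n k : (k <= n)%N ->
  (ps_invp f n.+1)`_k = (ps_invp f n)`_k.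
Proof.
move=> le_kn /=; rewrite coefD coefZ coefXn.
by rewrite (ltn_eqF (leq_ltn_trans le_kn (ltnSn n))) mulr0 addr0.
Qed.

Lemma coef_ps_invp (F : fieldType) (f : ps F) n k : (k <= n)%N ->
  (ps_invp f n)`_k = (ps_invp f k)`_k.
Proof.
elim: n => [|n IH]; first by rewrite leqn0 => /eqP ->.
rewrite leq_eqVlt => /orP [/eqP -> //|]; rewrite ltnS => le_kn.
by rewrite coef_ps_invpS // IH.
Qed.

Lemma ps_invpP (F : fieldType) (f : ps F) n m k : f 0%N != 0 ->
  (k <= n)%N -> (n < m)%N -> (ps_trunc m f * ps_invp f n)`_k = (k == 0%N)%:R.
Proof.
move=> f0; elim: n m k => [|n IH] m k.
  rewrite leqn0 => /eqP -> m0 /=; rewrite coef0M ps_truncE m0 coefC /=.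
  by rewrite mulfV.
rewrite leq_eqVlt ltnS => /orP [/eqP ->|le_kn] lt_nm; last first.
  rewrite /= mulrDr coefD -scalerAr coefZ coefMXn ltnS le_kn mulr0 addr0.
  exact: IH m k le_kn (ltnW lt_nm).
rewrite /= mulrDr coefD -scalerAr coefZ coefMXn ltnn subnn ps_truncE.
rewrite (ltn_trans (ltn0Sn n) lt_nm) /=.
have -> : (ps_trunc m f * ps_invp f n)`_n.+1 = (ps_trunc n.+2 f * ps_invp f n)`_n.+1.
  rewrite (coefM_take _ _ (ltnSn n.+1)) ps_take_truncS //.
  by rewrite take_poly_id // (leq_trans (size_ps_invp f n)).
by rewrite mulNr (mulrC _ (f 0%N)) mulrN mulrA mulfV // mul1r subrr.
Qed.

Lemma ps_trunc_inv (F : fieldType) (f : ps F) n : f 0%N != 0 ->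
  ps_trunc n.+1 (ps_inv f) = ps_invp f n.
Proof.
move=> f0; apply/polyP => i; rewrite ps_truncE /ps_inv f0.
case: ifP => [lt_in|/negbT]; first by rewrite coef_ps_invp.
rewrite -leqNgt => le_ni.
by rewrite nth_default // (leq_trans (size_ps_invp f n)).
Qed.

Lemma ps_mulVx (F : fieldType) : {in @ps_unit F, left_inverse 1 (@ps_inv F) *%R}.
Proof.
move=> f f0; apply: funext => n; rewrite /GRing.mul /= /ps_mul ps_trunc_inv //.
by rewrite mulrC (ps_invpP f0 (leqnn n) (ltnSn n)).
Qed.

Lemma ps_unitPl (F : fieldType) (x y : ps F) : y * x = 1 -> ps_unit x.
Proof.
move=> /(congr1 (fun f : ps F => f 0%N)); rewrite /GRing.mul /= /ps_mul coef0M.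
rewrite !ps_truncE /= /ps_unit => yx; apply/eqP => x0; move: yx.
by rewrite x0 mulr0 /GRing.one /= /ps_one /= => /eqP; rewrite eq_sym oner_eq0.
Qed.

Lemma ps_invr_out (F : fieldType) : {in [predC @ps_unit F], @ps_inv F =1 id}.
Proof. by move=> f; rewrite inE /= unfold_in /ps_inv => /negbTE ->. Qed.

HB.instance Definition _ (F : fieldType) :=
  GRing.ComNzRing_hasMulInverse.Build (ps F) (@ps_mulVx F) (@ps_unitPl F) (@ps_invr_out F).

Lemma ps_neq0 (F : fieldType) (f : ps F) : f != 0 -> exists i, f i != 0.
Proof.
move=> f0; apply/not_existsP => H; move/eqP: f0; apply; apply: funext => i.
by apply/eqP; apply/negPn/negP => /(H i).
Qed.

Lemma ps_mulf_eq0 (F : fieldType) (x y : ps F) : x * y = 0 -> (x == 0) || (y == 0).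
Proof.
move=> xy0; apply/negPn/negP; rewrite negb_or => /andP [/ps_neq0 ex /ps_neq0 ey].
case: (ex_minnP ex) => i xi imin; case: (ex_minnP ey) => j yj jmin.
move: xy0 => /(congr1 (fun f : ps F => f (i + j)%N)).
rewrite /GRing.mul /= /ps_mul coefM.
have lt_i : (i < (i + j).+1)%N by rewrite ltnS leq_addr.
rewrite (bigD1 (Ordinal lt_i)) //= big1 ?addr0.
  rewrite !ps_truncE lt_i ltnS leq_subr addKn => /eqP; rewrite mulf_eq0.
  by rewrite (negPf xi) (negPf yj).
move=> k; rewrite -val_eqE /= => ki; rewrite !ps_truncE ltn_ord ltnS leq_subr.
case: (ltngtP k i) ki => // [lt_ki | lt_ik] _.
  have : x k == 0 by apply/negP => /negP /imin; rewrite leqNgt lt_ki.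
  by move/eqP ->; rewrite mul0r.
have : y (i + j - k)%N == 0.
  apply/negP => /negP /jmin; rewrite leqNgt => /negP; apply.
  by have := ltn_ord k; lia.
by move/eqP ->; rewrite mulr0.
Qed.

HB.instance Definition _ (F : fieldType) :=
  GRing.ComUnitRing_isIntegral.Build (ps F) (@ps_mulf_eq0 F).


Notation "x %:F" := (@FracField.tofrac _ x) : ring_scope.

Definition Kinf (F : fieldType) : fieldType := {fraction ps F}.

Definition ps_X (F : fieldType) : ps F := fun n => (n == 1%N)%:R.
Definition ps_const (F : fieldType) (c : F) : ps F := fun n => if n == 0%N then c else 0.

Definition pi_inf (F : fieldType) : Kinf F := (ps_X F)%:F.

Definition O_inf (F : fieldType) : set (Kinf F) := [set x | exists f : ps F, x = f%:F].

Definition A_to_K (F : fieldType) (p : {poly F}) : Kinf F :=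
  (map_poly (fun c : F => (ps_const c)%:F : Kinf F) p).[(pi_inf F)^-1].

Definition mx2 (R : Type) (a b c d : R) : 'M[R]_2 :=
  \matrix_(i < 2, j < 2) if i == 0 :> nat then (if j == 0 :> nat then a else b)
                          else (if j == 0 :> nat then c else d).

Definition Iwahori (F : fieldType) : set 'M[Kinf F]_2 :=
  [set k : 'M[Kinf F]_2 | (forall i j, @O_inf F (k i j)) /\
           (exists k' : 'M[Kinf F]_2, (forall i j, @O_inf F (k' i j)) /\ k *m k' = 1%:M) /\
           (exists x : Kinf F, @O_inf F x /\ k 1 0 = pi_inf F * x)].

Definition KI (F : fieldType) : set 'M[Kinf F]_2 :=
  [set M | exists lam : Kinf F, exists k : 'M[Kinf F]_2, lam != 0 /\ @Iwahori F k /\ M = lam *: k].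

(* oriented edges of the Bruhat-Tits tree: cosets g K_inf^x I_inf *)
Definition edge (F : fieldType) (g : 'M[Kinf F]_2) : set 'M[Kinf F]_2 :=
  (fun M => g *m M) @` @KI F.

Definition e0 (F : fieldType) : set 'M[Kinf F]_2 := edge 1%:M.

Definition act (F : fieldType) (h : 'M[Kinf F]_2) (E : set 'M[Kinf F]_2) : set 'M[Kinf F]_2 :=
  (fun M => h *m M) @` E.

Definition Gamma0 (F : fieldType) (n : {poly F}) : set 'M[{poly F}]_2 :=
  [set g | g \in unitmx /\ n %| g 1 0].

(* deg, with deg 0 = -oo handled by callers *)
Definition degp (F : fieldType) (p : {poly F}) : nat := (size p).-1.

Definition delta_cand (F : fieldType) (n c d : {poly F}) (N : nat) : Prop :=
  exists x y : {poly F}, ((x != 0) || (y != 0)) /\ maxn (size x) (size y) = N.+1 /\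
                         coprimep (c * x + d * y) n.

Definition is_delta (F : fieldType) (n c d : {poly F}) (N : nat) : Prop :=
  delta_cand n c d N /\ forall M, delta_cand n c d M -> (N <= M)%N.

Definition eps (F : fieldType) (n c d : {poly F}) (delta : nat) : nat :=
  if `[< exists x0 y0 : {poly F}, size x0 = delta.+1 /\ (size y0 <= delta)%N /\
                                  coprimep (c * x0 + d * y0) n >] then 0%N else 1%N.

Definition w_mat (F : fieldType) (n : {poly F}) : 'M[Kinf F]_2 := mx2 0 (-1) (A_to_K n) 0.

(* Main.v *)
Require Import Defs.
From HB Require Import structures.
From mathcomp Require Import all_boot all_order all_algebra.
From mathcomp Require Import boolp classical_sets.
From mathcomp Require Import ring zify.
Import GRing.Theory.
Set Implicit Arguments. Unset Strict Implicit. Unset Printing Implicit Defensive.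
Local Open Scope ring_scope.

Section PS.
Variable F : fieldType.

Lemma psM0 (f g : ps F) : (f * g) 0%N = f 0%N * g 0%N.
Proof. by rewrite /GRing.mul /= /ps_mul coef0M !ps_truncE. Qed.

Lemma psD0 (f g : ps F) : (f + g) 0%N = f 0%N + g 0%N.
Proof. by []. Qed.

Lemma psX0 k : ((ps_X F) ^+ k.+1) 0%N = 0.
Proof. by rewrite exprS psM0 /ps_X /= mul0r. Qed.

Lemma ps_trunc_const (c : F) m : ps_trunc m.+1 (ps_const c) = c%:P.
Proof.
apply/polyP => i; rewrite ps_truncE coefC /ps_const.
by case: i => [|i] //=; case: ifP.
Qed.

Lemma ps_constD (a b : F) : ps_const (a + b) = ps_const a + ps_const b.
Proof. by apply: funext => i; rewrite /ps_const /GRing.add /= /ps_add; case: ifP; rewrite ?addr0. Qed.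
Lemma ps_constN (a : F) : ps_const (- a) = - ps_const a.
Proof. by apply: funext => i; rewrite /ps_const /GRing.opp /= /ps_opp; case: ifP; rewrite ?oppr0. Qed.
Lemma ps_constM (a b : F) : ps_const (a * b) = ps_const a * ps_const b.
Proof.
apply: funext => i; rewrite /GRing.mul /= /ps_mul !ps_trunc_const -polyCM coefC.
by rewrite /ps_const.
Qed.
Lemma ps_const1 : ps_const (1 : F) = 1.
Proof. by apply: funext => i; rewrite /ps_const /GRing.one /= /ps_one; case: i. Qed.

Definition psi (c : F) : Kinf F := (ps_const c)%:F.

Lemma psi_zmod : zmod_morphism psi.
Proof. by move=> a b; rewrite /psi ps_constD ps_constN tofracD tofracN. Qed.
Lemma psi_monoid : monoid_morphism psi.
Proof. by split; [rewrite /psi ps_const1 tofrac1 | move=> a b; rewrite /psi ps_constM tofracM]. Qed.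
End PS.

HB.instance Definition _ (F : fieldType) := GRing.isZmodMorphism.Build F (Kinf F) (@psi F) (@psi_zmod F).
HB.instance Definition _ (F : fieldType) := GRing.isMonoidMorphism.Build F (Kinf F) (@psi F) (@psi_monoid F).

Section AK.
Variable F : fieldType.
Local Notation pi := (pi_inf F).
Local Notation A_to_K := (@A_to_K F).

Lemma psi_comm : commr_rmorph (@psi F) pi^-1.
Proof. by move=> x; rewrite /GRing.comm mulrC. Qed.

Lemma AK_horner (p : {poly F}) : A_to_K p = horner_morph psi_comm p.
Proof. by []. Qed.

Lemma AKD (p q : {poly F}) : A_to_K (p + q) = A_to_K p + A_to_K q.
Proof. by rewrite !AK_horner rmorphD. Qed.
Lemma AKN (p : {poly F}) : A_to_K (- p) = - A_to_K p.
Proof. by rewrite !AK_horner rmorphN. Qed.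
Lemma AKB (p q : {poly F}) : A_to_K (p - q) = A_to_K p - A_to_K q.
Proof. by rewrite !AK_horner rmorphB. Qed.
Lemma AKM (p q : {poly F}) : A_to_K (p * q) = A_to_K p * A_to_K q.
Proof. by rewrite !AK_horner rmorphM. Qed.
Lemma AKC c : A_to_K c%:P = @psi F c.
Proof. by rewrite AK_horner horner_morphC. Qed.
Lemma AKX : A_to_K 'X = pi^-1.
Proof. by rewrite AK_horner horner_morphX. Qed.
Lemma AK0 : A_to_K 0 = 0.
Proof. by rewrite AK_horner rmorph0. Qed.

Lemma ps_X_neq0 : ps_X F != 0.
Proof.
apply/eqP => /(congr1 (fun f : ps F => f 1%N)); rewrite /ps_X /=.
by move/eqP; rewrite oner_eq0.
Qed.

Lemma pi_neq0 : pi != 0.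
Proof. by rewrite /pi_inf tofrac_eq0 ps_X_neq0. Qed.

Lemma VL m (p : {poly F}) : (size p <= m.+1)%N ->
  exists f : ps F, A_to_K p * pi ^+ m = f%:F /\ f 0%N = p`_m.
Proof.
elim: m p => [|m IH] p sp.
  rewrite (size1_polyC sp) AKC expr0 mulr1 coefC /=.
  by exists (ps_const p`_0).
have sq : (size (drop_poly 1 p) <= m.+1)%N by rewrite size_drop_poly; lia.
have [g [Hg g0]] := IH _ sq.
have Hp : p = (p`_0)%:P + drop_poly 1 p * 'X.
  rewrite -[LHS](poly_take_drop 1) expr1; congr (_ + _).
  by apply/polyP => i; rewrite coef_take_poly coefC; case: i.
exists (ps_const p`_0 * ps_X F ^+ m.+1 + g); split.
  rewrite {1}Hp AKD AKM AKC AKX rmorphD rmorphM rmorphXn /= -Hg.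
  have := pi_neq0; rewrite /pi_inf => h.
  rewrite /psi; set P := (ps_X F)%:F; set c := (ps_const _)%:F; set Q := A_to_K _.
  rewrite exprS mulrDl; congr (_ + _); by rewrite mulrA -(mulrA Q) mulVf // mulr1.

by rewrite psD0 psM0 psX0 mulr0 add0r g0 coef_drop_poly addn1.
Qed.
End AK.
Section OU.
Variable F : fieldType.
Local Notation pi := (pi_inf F).
Local Notation KF := (Kinf F).

Lemma O_add (x y : KF) : O_inf x -> O_inf y -> O_inf (x + y).
Proof. by move=> [f ->] [g ->]; exists (f + g); rewrite tofracD. Qed.
Lemma O_mul (x y : KF) : O_inf x -> O_inf y -> O_inf (x * y).
Proof. by move=> [f ->] [g ->]; exists (f * g); rewrite tofracM. Qed.
Lemma O_opp (x : KF) : O_inf x -> O_inf (- x).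
Proof. by move=> [f ->]; exists (- f); rewrite tofracN. Qed.
Lemma O_0 : @O_inf F 0.
Proof. by exists 0; rewrite tofrac0. Qed.
Lemma O_1 : @O_inf F 1.
Proof. by exists 1; rewrite tofrac1. Qed.
Lemma O_pi : O_inf pi.
Proof. by exists (ps_X F). Qed.

Definition isU (x : KF) := exists f : ps F, x = f%:F /\ f 0%N != 0.

Lemma U_O x : isU x -> O_inf x.
Proof. by move=> [f [-> _]]; exists f. Qed.

Lemma U_inv x : isU x -> isU x^-1.
Proof.
move=> [f [-> f0]]; have fu : f \is a GRing.unit by [].
exists f^-1; split; first by rewrite rmorphV.
have := mulVr fu => /(congr1 (fun g : ps F => g 0%N)); rewrite psM0.
move=> h; apply/eqP => h0; move: h; rewrite h0 mul0r.
by rewrite /GRing.one /= /ps_one /= => /eqP; rewrite eq_sym oner_eq0.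
Qed.

Lemma U_mul x y : isU x -> isU y -> isU (x * y).
Proof.
move=> [f [-> f0]] [g [-> g0]]; exists (f * g); split; first by rewrite tofracM.
by rewrite psM0 mulf_neq0.
Qed.

Lemma U_neq0 x : isU x -> x != 0.
Proof.
move=> [f [-> f0]]; rewrite tofrac_eq0; apply: contra f0 => /eqP ->; by [].
Qed.

Lemma U_psi (c : F) : c != 0 -> isU (@psi F c).
Proof. by move=> c0; exists (ps_const c). Qed.

Lemma U_opp x : isU x -> isU (- x).
Proof. by move=> [f [-> f0]]; exists (- f); rewrite tofracN; split => //; rewrite /GRing.opp /= /ps_opp oppr_eq0. Qed.

Lemma mul2E (R : pzRingType) (A B : 'M[R]_2) i j :
  (A *m B) i j = A i 0 * B 0 j + A i 1 * B 1 j.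
Proof.
rewrite mxE big_ord_recl big_ord1; have -> : lift ord0 ord0 = 1 :> 'I_2 by apply/val_inj.
by [].
Qed.

Lemma KI_mul (M1 M2 : 'M[KF]_2) : KI M1 -> KI M2 -> KI (M1 *m M2).
Proof.
move=> [l1 [k1 [l10 [Ik1 ->]]]] [l2 [k2 [l20 [Ik2 ->]]]].
case: Ik1 => Ok1 [[k1' [Ok1' Hk1']] [x1 [Ox1 Hx1]]].
case: Ik2 => Ok2 [[k2' [Ok2' Hk2']] [x2 [Ox2 Hx2]]].
exists (l1 * l2), (k1 *m k2); split; first by rewrite mulf_neq0.
split; last by rewrite -scalemxAr -scalemxAl scalerA mulrC.
split.
  by move=> i j; rewrite mul2E; apply: O_add; apply: O_mul.
split.
  exists (k2' *m k1'); split.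
    by move=> i j; rewrite mul2E; apply: O_add; apply: O_mul.
  by rewrite mulmxA -(mulmxA k1) Hk2' mulmx1 Hk1'.
exists (x1 * k2 0 0 + k1 1 1 * x2); split.
  by apply: O_add; apply: O_mul.
by rewrite mul2E Hx1 Hx2 mulrDr !mulrA (mulrC (k1 1 1)).
Qed.

Lemma edge_eq (g h K K' : 'M[KF]_2) (l : KF) :
  l != 0 -> Iwahori K -> Iwahori K' -> K *m K' = 1%:M ->
  h = g *m (l *: K) -> act h (@e0 F) = edge g.
Proof.
move=> l0 IK IK' KK' ->.
have KIK : KI (l *: K) by exists l, K.
have KIK' : KI (l^-1 *: K') by exists l^-1, K'; rewrite invr_eq0.
rewrite /act /e0 /edge; apply/seteqP; split => M /=.
  move=> [N [P KP <-] <-]; exists ((l *: K) *m (1%:M *m P)).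
    by rewrite mul1mx; apply: KI_mul.
  by rewrite mulmxA.
move=> [P KP <-]; exists (1%:M *m ((l^-1 *: K') *m P)).
  by exists ((l^-1 *: K') *m P) => //; apply: KI_mul.
rewrite mul1mx !mulmxA -(mulmxA g) -scalemxAr -scalemxAl KK' scalerA.
by rewrite mulVf // scale1r mulmx1.
Qed.
End OU.
Lemma det2 (R : comNzRingType) (A : 'M[R]_2) :
  \det A = A 0 0 * A 1 1 - A 0 1 * A 1 0.
Proof.
rewrite (expand_det_row _ 0) big_ord_recl big_ord1 /cofactor !det_mx11.
rewrite !mxE.
have L (i : 'I_2) (j : 'I_1) : lift i j = if val i == 0%N then 1 else 0.
  by apply/val_inj; rewrite /= ord1; case: i => [[|[|]]] //=.
rewrite !L /=.
rewrite /= expr0 expr1 mul1r; ring.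
Qed.

Lemma mx2E (R : Type) (a b c d : R) :
  [/\ mx2 a b c d 0 0 = a, mx2 a b c d 0 1 = b, mx2 a b c d 1 0 = c & mx2 a b c d 1 1 = d].
Proof. by rewrite !mxE. Qed.

Section Poly.
Variable F : fieldType.
Implicit Types p q x y c d n : {poly F}.

Lemma size_mulg x (g : {poly F}) : g != 0 ->
  (size (x * g)%R + 1 = size x + size g)%N \/ (size x = 0 /\ size (x * g)%R = 0)%N.
Proof.
move=> g0; have [->|x0] := eqVneq x 0; first by right; rewrite mul0r size_poly0.
left; rewrite size_mul // addn1 prednK // addn_gt0 size_poly_gt0 x0 //.
Qed.

Lemma prim n c d delta x y : is_delta n c d delta ->
  maxn (size x) (size y) = delta.+1 -> coprimep (c * x + d * y) n -> coprimep x y.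
Proof.
move=> [_ dmin] sxy cop.
set g := gcdp x y.
have xy0 : (x != 0) || (y != 0).
  rewrite -negb_and; apply/negP => /andP [/eqP x0 /eqP y0]; move: sxy.
  by rewrite x0 y0 size_poly0.
have g0 : g != 0 by rewrite gcdp_eq0 negb_and.
have hx : x = (x %/ g) * g by rewrite divpK // dvdp_gcdl.
have hy : y = (y %/ g) * g by rewrite divpK // dvdp_gcdr.
set x1 := x %/ g in hx; set y1 := y %/ g in hy.
have cop1 : coprimep (c * x1 + d * y1) n.
  apply: coprimep_dvdr cop; rewrite hx hy !mulrA -mulrDl; exact: dvdp_mulIl.
have xy10 : (x1 != 0) || (y1 != 0).
  rewrite -negb_and; apply/negP => /andP [/eqP x0 /eqP y0]; move: xy0.
  by rewrite hx hy x0 y0 !mul0r eqxx.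
have hpos : (0 < maxn (size x1) (size y1))%N.
  case/orP: xy10 => h; rewrite leq_max ?(size_poly_gt0 x1) ?(size_poly_gt0 y1) h ?orbT //.
have := dmin (maxn (size x1) (size y1)).-1.
have cand : delta_cand n c d (maxn (size x1) (size y1)).-1.
  exists x1, y1; split => //; split => //; rewrite prednK //.
move=> /(_ cand) hd.
have := size_mulg x1 g0; have := size_mulg y1 g0; rewrite -hx -hy.
have : (0 < size g)%N by rewrite size_poly_gt0.
move: sxy hpos hd; rewrite coprimep_def -/g.
move=> sxy hpos hd sg Hy Hx.
have hd' : (delta < maxn (size x1) (size y1))%N by rewrite -(prednK hpos) ltnS.
apply/eqP; clear hd.
set a := size x1 in Hx hd' *; set b := size y1 in Hy hd' *; set s := size g in sg Hx Hy *; set u := size x in Hx sxy; set v := size y in Hy sxy.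
clear -Hx Hy sxy hd' sg; lia.
Qed.
End Poly.
Section Mx2.
Variable R : Type.
Variables a b c d : R.
Lemma mx2_00 : mx2 a b c d 0 0 = a. Proof. by rewrite mxE. Qed.
Lemma mx2_01 : mx2 a b c d 0 1 = b. Proof. by rewrite mxE. Qed.
Lemma mx2_10 : mx2 a b c d 1 0 = c. Proof. by rewrite mxE. Qed.
Lemma mx2_11 : mx2 a b c d 1 1 = d. Proof. by rewrite mxE. Qed.
End Mx2.
Definition mx2S := (mx2_00, mx2_01, mx2_10, mx2_11).

Lemma construct (F : fieldType) (n : {poly F}) (gam : 'M[{poly F}]_2) x y :
  gam \in unitmx -> coprimep x y -> coprimep (gam 1 0 * x + gam 1 1 * y) n ->
  exists g0, Gamma0 n g0 /\ (g0 *m gam) 0 0 = y /\ (g0 *m gam) 0 1 = - x.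
Proof.
move=> gu cxy cop.
move: gu; rewrite unitmxE det2 poly_unitE => /andP [sD uD].
set a := gam 0 0 in sD uD *; set b := gam 0 1 in sD uD *.
set c := gam 1 0 in sD uD cop *; set d := gam 1 1 in sD uD cop *.
set D := a * d - b * c in sD uD.
set Dc := D`_0 in uD.
have hD : D = Dc%:P by apply: size1_polyC; rewrite (eqP sD).
have Dc0 : Dc != 0 by rewrite -unitfE.
have key : Dc^-1%:P * (a * d - b * c) = 1.
  by rewrite -/D hD -polyCM mulVf.
set p := Dc^-1 *: (c * x + d * y).
set q := - (Dc^-1 *: (a * x + b * y)).
have hp0 : p * a + q * c = y.
  rewrite /p /q -!mul_polyC.
  transitivity (Dc^-1%:P * (a * d - b * c) * y); first by ring.
  by rewrite key mul1r.
have hp1 : p * b + q * d = - x.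
  rewrite /p /q -!mul_polyC.
  transitivity (- (Dc^-1%:P * (a * d - b * c) * x)); first by ring.
  by rewrite key mul1r.
have cpq : coprimep p q.
  apply/coprimepP => e ep eq; move/coprimepP: cxy; apply.
    by rewrite -dvdpNr -hp1; apply: dvdp_add; apply: dvdp_mulr.
  by rewrite -hp0; apply: dvdp_add; apply: dvdp_mulr.
have cpn : coprimep p n by rewrite /p coprimepZl ?invr_eq0.
have : coprimep p (n * q) by rewrite coprimepMr cpn cpq.
case/Bezout_coprimepP => [[u1 u2] /= hu].
exists (mx2 p q (n * - u2) u1); split; last first.
  by rewrite !mul2E !mx2S hp0 hp1.
split; last by rewrite mx2S; apply: dvdp_mulIl.
rewrite unitmxE det2 !mx2S.
have -> : p * u1 - q * (n * - u2) = u1 * p + u2 * (n * q) by ring.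
move: hu; rewrite -size_poly_eq1 => /eqP s1.
rewrite poly_unitE s1 eqxx /= unitfE.
set z := _ + _ in s1 *.
have : z != 0 by rewrite -size_poly_eq0 s1.
by rewrite -lead_coef_eq0 lead_coefE s1.
Qed.
Lemma ord2P (i : 'I_2) : i = 0 \/ i = 1.
Proof. by case: i => [[|[|m]] Hi]; [left|right|]; try apply/val_inj. Qed.

Lemma mx2_eq (R : Type) (A B : 'M[R]_2) :
  A 0 0 = B 0 0 -> A 0 1 = B 0 1 -> A 1 0 = B 1 0 -> A 1 1 = B 1 1 -> A = B.
Proof.
move=> h00 h01 h10 h11; apply/matrixP => i j.
by case: (ord2P i) => ->; case: (ord2P j) => ->.
Qed.

Lemma unit_det (F : fieldType) (G : 'M[{poly F}]_2) : G \in unitmx ->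
  exists2 Ec : F, Ec != 0 & G 0 0 * G 1 1 - G 0 1 * G 1 0 = Ec%:P.
Proof.
rewrite unitmxE det2 poly_unitE => /andP [sD uD].
exists ((G 0 0 * G 1 1 - G 0 1 * G 1 0)`_0); first by rewrite -unitfE.
by apply: size1_polyC; rewrite (eqP sD).
Qed.

Lemma W_ex (F : fieldType) (p : {poly F}) d : (size p <= d)%N ->
  exists W, O_inf W /\ A_to_K p * pi_inf F ^+ d = pi_inf F * W.
Proof.
case: d => [|dl] sp.
  exists 0; split; first exact: O_0.
  by move/size_poly_leq0P: sp => ->; rewrite AK0 !mul0r mulr0.
have [Wf [hWf _]] := @VL F dl p sp.
exists Wf%:F; split; first by exists Wf.
by rewrite -hWf exprS mulrCA.
Qed.
Section Generic.
Variable K : fieldType.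


Lemma gen_k00 (N be pn pd : K) : N * be ^+ 2 * (pn * (pd * pd)) = N * pn * (be * pd) * (be * pd).
Proof. ring. Qed.

Lemma gen_t (al be pd : K) : be != 0 -> pd != 0 -> al / be = al * pd * (be * pd)^-1.
Proof. move=> b0 p0; field; rewrite b0 p0 //. Qed.

Lemma scale2E (a : K) (A : 'M[K]_2) i j : (a *: A) i j = a * A i j.
Proof. by rewrite mxE. Qed.

Lemma gen_case0 (al be ga de N pk u k00 t : K) :
  be != 0 -> N != 0 -> pk != 0 -> k00 != 0 ->
  u = - de / (N * be) -> k00 = (al * de - be * ga) / (N * be ^+ 2 * pk) -> t = al / be ->
  mx2 al be ga de = mx2 0 (-1) N 0 *m mx2 pk u 0 1 *m ((- be) *: mx2 k00 0 t 1) /\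
  mx2 k00 0 t 1 *m mx2 k00^-1 0 (- t * k00^-1) 1 = 1%:M.
Proof.
move=> b0 N0 p0 k0 -> hk ->; split.
  apply: mx2_eq; rewrite !mul2E !scale2E !mx2S ?hk; field; rewrite ?b0 ?N0 ?p0 //.
apply: mx2_eq; rewrite !mul2E !mx2S !mxE /=; field; rewrite ?k0 ?b0 //.
Qed.

Lemma gen_k0 (al be ga de N pn pd E : K) : al * de - be * ga = E ->
  N != 0 -> be != 0 -> pn != 0 -> pd != 0 ->
  (al * de - be * ga) / (N * be ^+ 2 * (pn * (pd * pd))) = E * (N * pn * (be * pd) * (be * pd))^-1.
Proof. move=> <- h1 h2 h3 h4 *; field; rewrite h1 h2 h3 h4 //. Qed.

Lemma gen_k1 (al be ga de N pn pd pi E : K) : al * de - be * ga = E ->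
  N != 0 -> al != 0 -> pn != 0 -> pd != 0 -> pi != 0 ->
  (be * ga - al * de) * pi / (al ^+ 2 * N * (pn * (pd * pd) * pi)) =
   - E * (N * pn * (al * pd) * (al * pd))^-1.
Proof. move=> <- h1 h2 h3 h4 h5; field; rewrite h1 h2 h3 h4 h5 //. Qed.

Lemma gen_case1 (al be ga de N pi pk u l t s : K) :
  al != 0 -> N != 0 -> pk != 0 -> pi != 0 -> s != 0 ->
  u = - ga / (N * al) -> l = - al / pi -> t = be / al ->
  s = (be * ga - al * de) * pi / (al ^+ 2 * N * pk) ->
  mx2 al be ga de = mx2 0 (-1) N 0 *m mx2 pk u 0 1 *m mx2 0 1 pi 0 *m (l *: mx2 1 t 0 s) /\
  mx2 1 t 0 s *m mx2 1 (- t * s^-1) 0 s^-1 = 1%:M.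
Proof.
move=> a0 N0 p0 pi0 s0 -> -> -> hs; split.
  apply: mx2_eq; rewrite !mul2E !scale2E !mx2S ?hs; field; rewrite ?a0 ?N0 ?p0 ?pi0 //.
apply: mx2_eq; rewrite !mul2E !mx2S !mxE /=; field; rewrite ?s0 //.
Qed.
End Generic.

Unset Implicit Arguments.

Lemma map2E (R S : Type) (f : R -> S) (A : 'M[R]_2) i j : (map_mx f A) i j = f (A i j).
Proof. by rewrite mxE. Qed.

Theorem lemma4p2 (F : finFieldType) (n : {poly F}) (gamma : 'M[{poly F}]_2)
    (delta : nat) :
  n \is monic -> gamma \in unitmx ->
  is_delta n (gamma 1 0) (gamma 1 1) delta ->
  let e := eps n (gamma 1 0) (gamma 1 1) delta in
  exists (u : Kinf F) (gamma0 : 'M[{poly F}]_2),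
    Gamma0 n gamma0 /\
    act (map_mx (@A_to_K F) (gamma0 *m gamma)) (@e0 F) =
    edge (w_mat n *m mx2 (pi_inf F ^+ (degp n + 2 * delta + e)%N) u 0 1
                 *m mx2 0 1 (pi_inf F) 0 ^+ e).
Proof.
move=> nmon gu hdel e.
set pi := pi_inf F.
have pi0 : pi != 0 := @pi_neq0 F.
have n0 : n != 0 by apply: monic_neq0.
have [Un [hUn Un0]] := @VL F (degp n) n (leqSpred _).
have UUn : isU (Un%:F).
  by exists Un; split => //; rewrite Un0 /degp -lead_coefE (monicP nmon) oner_neq0.
set N := A_to_K n in hUn.
have N0 : N != 0.
  apply/eqP => N0; move: (U_neq0 UUn); rewrite -hUn N0 mul0r eqxx //.
rewrite /e /eps; case: asboolP => [[x0 [y0 [sx0 [sy0 cop0]]]] | nex].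
-
  have cxy : coprimep x0 y0.
    apply: (prim hdel) cop0; rewrite sx0; apply/maxn_idPl; lia.
  have [g0 [G0 [h00 h01]]] := construct gu cxy cop0.
  set G := g0 *m gamma in h00 h01.
  have GU : G \in unitmx by rewrite unitmx_mul; case: G0 => -> _.
  have [Ec Ec0 hE] := unit_det GU.
  set al := A_to_K (G 0 0); set be := A_to_K (G 0 1).
  set ga := A_to_K (G 1 0); set de := A_to_K (G 1 1).
  have hdet : al * de - be * ga = psi Ec.
    by rewrite /al /be /ga /de -AKM -AKM -AKB hE AKC.
  have [Ub [hUb Ub0]] : exists f : ps F, be * pi ^+ delta = f%:F /\ f 0%N = (G 0 1)`_delta.
    by apply: VL; rewrite h01 size_opp sx0.
  have UUb : isU (Ub%:F).
    exists Ub; split => //; rewrite Ub0 h01 coefN oppr_eq0.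
    by rewrite -[delta]/(delta.+1.-1) -sx0 -lead_coefE lead_coef_eq0 -size_poly_gt0 sx0.
  have be0 : be != 0.
    apply/eqP => b0; move: (U_neq0 UUb); rewrite -hUb b0 mul0r eqxx //.
  have [W [OW hW]] : exists W, O_inf W /\ al * pi ^+ delta = pi * W.
    by apply: W_ex; rewrite h00.
  set k := (degp n + 2 * delta + 0)%N.
  set u := - de / (N * be).
  set k00 := (al * de - be * ga) / (N * be ^+ 2 * pi ^+ k).
  set t := al / be.
  exists u, g0; split; first exact: G0.
  have pd : pi ^+ delta != 0 := expf_neq0 _ pi0.
  have pn : pi ^+ degp n != 0 := expf_neq0 _ pi0.
  have hk00 : k00 = psi Ec * (Un%:F * Ub%:F * Ub%:F)^-1.
    by rewrite /k00 /k addn0 mul2n -addnn !exprD (gen_k0 hdet N0 be0 pn pd) hUn hUb.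
  have Uk : isU k00.
    rewrite hk00; apply: U_mul; first exact: U_psi.
    by apply: U_inv; apply: U_mul; first apply: U_mul.
  have k0 : k00 != 0 := U_neq0 Uk.
  have ht : t = pi * (W * (Ub%:F)^-1).
    by rewrite /t (gen_t al be0 pd) hW hUb mulrA.
  have pk0 : pi ^+ k != 0 := expf_neq0 _ pi0.
  have [hG hKK] := gen_case0 be0 N0 pk0 k0 (erefl u) (erefl k00) (erefl t).
  have Ot : O_inf t.
    by rewrite ht; apply: O_mul; [exact: O_pi | apply: O_mul; [exact: OW | apply/U_O/U_inv; exact: UUb]].
  have Ok : O_inf k00^-1 by apply/U_O/U_inv.
  apply: (@edge_eq F _ _ (mx2 k00 0 t 1) (mx2 k00^-1 0 (- t * k00^-1) 1) (- be)).
  - rewrite oppr_eq0; exact: be0.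
  - split.
      move=> i j; case: (ord2P i) => ->; case: (ord2P j) => ->; rewrite !mx2S.
      + exact: U_O.
      + exact: O_0.
      + exact: Ot.
      + exact: O_1.
    split.
      exists (mx2 k00^-1 0 (- t * k00^-1) 1); split; last exact: hKK.
      move=> i j; case: (ord2P i) => ->; case: (ord2P j) => ->; rewrite !mx2S.
      + exact: Ok.
      + exact: O_0.
      + rewrite mulNr; apply/O_opp/O_mul; [exact: Ot | exact: Ok].
      + exact: O_1.
    exists (W * (Ub%:F)^-1); split; last by rewrite mx2S.
    apply: O_mul; [exact: OW | apply/U_O/U_inv; exact: UUb].
  - split.
      move=> i j; case: (ord2P i) => ->; case: (ord2P j) => ->; rewrite !mx2S.
      + exact: Ok.
      + exact: O_0.
      + rewrite mulNr; apply/O_opp/O_mul; [exact: Ot | exact: Ok].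
      + exact: O_1.
    split.
      exists (mx2 k00 0 t 1); split; last exact: mulmx1C.
      move=> i j; case: (ord2P i) => ->; case: (ord2P j) => ->; rewrite !mx2S.
      + exact: U_O.
      + exact: O_0.
      + exact: Ot.
      + exact: O_1.
    exists (- (W * (Ub%:F)^-1) * k00^-1); split.
      apply: O_mul; [apply/O_opp/O_mul; [exact: OW | apply/U_O/U_inv; exact: UUb] | exact: Ok].
    by rewrite mx2S ht !mulNr mulrN !mulrA.
  - exact: hKK.
  - rewrite expr0 mulmx1 /w_mat -/N -hG.
    by apply: mx2_eq; rewrite !map2E !mx2S.
-
  have [[x [y [xy0 [sxy cop]]]] _] := hdel.
  have sy : size y = delta.+1.
    case: (leqP (size y) delta) => hy.
      exfalso; apply: nex; exists x, y; split => //.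
      move: sxy hy; clear; lia.
    move: sxy hy; clear; lia.
  have cxy : coprimep x y by apply: (prim hdel) cop.
  have [g0 [G0 [h00 h01]]] := construct gu cxy cop.
  set G := g0 *m gamma in h00 h01.
  have GU : G \in unitmx by rewrite unitmx_mul; case: G0 => -> _.
  have [Ec Ec0 hE] := unit_det GU.
  set al := A_to_K (G 0 0); set be := A_to_K (G 0 1).
  set ga := A_to_K (G 1 0); set de := A_to_K (G 1 1).
  have hdet : al * de - be * ga = psi Ec.
    by rewrite /al /be /ga /de -AKM -AKM -AKB hE AKC.
  have [Ua [hUa Ua0]] : exists f : ps F, al * pi ^+ delta = f%:F /\ f 0%N = (G 0 0)`_delta.
    by apply: VL; rewrite h00 sy.
  have UUa : isU (Ua%:F).
    exists Ua; split => //; rewrite Ua0 h00.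
    by rewrite -[delta]/(delta.+1.-1) -sy -lead_coefE lead_coef_eq0 -size_poly_gt0 sy.
  have al0 : al != 0.
    apply/eqP => a0; move: (U_neq0 UUa); rewrite -hUa a0 mul0r eqxx //.
  have [V [hV _]] : exists f : ps F, be * pi ^+ delta = f%:F /\ f 0%N = (G 0 1)`_delta.
    by apply: VL; rewrite h01 size_opp -sxy leq_maxl.
  set k := (degp n + 2 * delta + 1)%N.
  set u := - ga / (N * al).
  set l := - al / pi.
  set t := be / al.
  set s := (be * ga - al * de) * pi / (al ^+ 2 * N * pi ^+ k).
  exists u, g0; split; first exact: G0.
  have pd : pi ^+ delta != 0 := expf_neq0 _ pi0.
  have pn : pi ^+ degp n != 0 := expf_neq0 _ pi0.
  have hs : s = - psi Ec * (Un%:F * Ua%:F * Ua%:F)^-1.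
    by rewrite /s /k mul2n -addnn !exprD expr1 (gen_k1 hdet N0 al0 pn pd pi0) hUn hUa.
  have Us : isU s.
    rewrite hs; apply: U_mul; first by apply/U_opp/U_psi.
    by apply: U_inv; apply: U_mul; first apply: U_mul.
  have s0 : s != 0 := U_neq0 Us.
  have ht : t = V%:F * (Ua%:F)^-1.
    by rewrite /t (gen_t be al0 pd) hV hUa.
  have pk0 : pi ^+ k != 0 := expf_neq0 _ pi0.
  have [hG hKK] := gen_case1 al0 N0 pk0 pi0 s0 (erefl u) (erefl l) (erefl t) (erefl s).
  have Ot : O_inf t.
    by rewrite ht; apply: O_mul; [by exists V | apply/U_O/U_inv].
  have Os : O_inf s^-1 by apply/U_O/U_inv.
  apply: (@edge_eq F _ _ (mx2 1 t 0 s) (mx2 1 (- t * s^-1) 0 s^-1) l).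
  - apply: mulf_neq0; [rewrite oppr_eq0; exact: al0 | rewrite invr_eq0; exact: pi0].
  - split.
      move=> i j; case: (ord2P i) => ->; case: (ord2P j) => ->; rewrite !mx2S.
      + exact: O_1.
      + exact: Ot.
      + exact: O_0.
      + exact: U_O.
    split.
      exists (mx2 1 (- t * s^-1) 0 s^-1); split; last exact: hKK.
      move=> i j; case: (ord2P i) => ->; case: (ord2P j) => ->; rewrite !mx2S.
      + exact: O_1.
      + rewrite mulNr; apply/O_opp/O_mul; [exact: Ot | exact: Os].
      + exact: O_0.
      + exact: Os.
    by exists 0; split; [exact: O_0 | rewrite mx2S mulr0].
  - split.
      move=> i j; case: (ord2P i) => ->; case: (ord2P j) => ->; rewrite !mx2S.
      + exact: O_1.
      + rewrite mulNr; apply/O_opp/O_mul; [exact: Ot | exact: Os].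
      + exact: O_0.
      + exact: Os.
    split.
      exists (mx2 1 t 0 s); split; last exact: mulmx1C.
      move=> i j; case: (ord2P i) => ->; case: (ord2P j) => ->; rewrite !mx2S.
      + exact: O_1.
      + exact: Ot.
      + exact: O_0.
      + exact: U_O.
    by exists 0; split; [exact: O_0 | rewrite mx2S mulr0].
  - exact: hKK.
  - rewrite expr1 /w_mat -/N -hG.
    by apply: mx2_eq; rewrite !map2E !mx2S.
Qed.
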